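(* Let $K$ be a Cantor set, let $T:K\to K$ be an endomorphism, and let $K_1,\dots,K_N$ be pairwise disjoint Cantor sets with $K=\bigcup_{i=1}^N K_i$. Then there exists an endomorphism $\widetilde T:K\to K$ such that for every $x\in K$ and every $1\le i\le N$, $\widetilde T(x)\in K_i$ if and only if $T(x)\in K_i$, and the orbit of every point of $K$ under $\widetilde T$ is finally periodic.
   Context: A Cantor set is a nonempty totally disconnected, perfect, compact metric space. An endomorphism of $K$ is a continuous surjection $K\to K$. The orbit of $x$ under a map $S$ is finally periodic if there exist integers $j,M>0$ with $S^{M+j}(x)=S^{j}(x)$. *)

(* Defs.v *)
From HB Require Import structures.
From mathcomp Require Import all_boot all_order all_algebra.
From mathcomp Require Import all_classical all_reals all_analysis.
Set Implicit Arguments. Unset Strict Implicit. Unset Printing Implicit Defensive.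
Import Order.TTheory GRing.Theory Num.Theory.
Local Open Scope classical_set_scope.

(* A Cantor set: a nonempty, totally disconnected, perfect, compact subset
   of a metric space (metric = pseudometric + Hausdorff, required separately). *)
Definition is_cantor_set {T : topologicalType} (A : set T) : Prop :=
  [/\ A !=set0, totally_disconnected A, perfect_set A & compact A].

Definition endomorphism {T : topologicalType} (f : T -> T) : Prop :=
  continuous f /\ (forall y : T, exists x : T, f x = y).

Definition finally_periodic {T : Type} (S : T -> T) (x : T) : Prop :=
  exists j M : nat, (0 < j)%N /\ (0 < M)%N /\ iter (M + j) S x = iter j S x.

(* Main.v *)
Require Import Defs.
From HB Require Import structures.
From mathcomp Require Import all_boot all_order all_algebra.
From mathcomp Require Import all_classical all_reals all_analysis.
From mathcomp Require Import finmap.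
Set Implicit Arguments. Unset Strict Implicit. Unset Printing Implicit Defensive.
Import Order.TTheory GRing.Theory Num.Theory.
Local Open Scope classical_set_scope.


Definition cyl (n : nat) (x : cantor_space) : set cantor_space :=
  [set y | forall k, (k < n)%N -> y k = x k].

Lemma bigI_in (T : Type) (s : seq (set T)) y :
  (\big[setI/setT]_(C <- s) C) y <-> (forall C, C \in s -> C y).
Proof.
elim: s => [|C s IH]; first by rewrite big_nil; split => // _ C; rewrite in_nil.
rewrite big_cons; split.
  by case=> HC /IH Hs D; rewrite in_cons => /orP[/eqP ->|/Hs].
by move=> H; split; [apply: H; rewrite mem_head|apply/IH => D HD; apply: H; rewrite in_cons HD orbT].
Qed.

Lemma bigI_clopen (T : topologicalType) (s : seq (set T)) :
  (forall C, C \in s -> clopen C) -> clopen (\big[setI/setT]_(C <- s) C).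
Proof.
elim: s => [|C s IH] H; first by rewrite big_nil; exact: clopenT.
rewrite big_cons; apply: clopenI; first by apply: H; rewrite mem_head.
by apply: IH => D HD; apply: H; rewrite in_cons HD orbT.
Qed.

Lemma zd_of_td (R : realType) (K : pseudoPMetricType R) :
  compact [set: K] -> totally_disconnected [set: K] -> zero_dimensional K.
Proof.
move=> cK tdK x y xy.
pose D := [set C : set K | clopen C /\ C x].
pose Q := \bigcap_(C in D) C.
suff QS : Q `<=` [set x].
  apply: contrapT => nC.
  have Qy : Q y.
    move=> C [clC Cx]; apply: contrapT => nCy; apply: nC; exists C; split => //.
  by move/eqP: xy; apply; rewrite (QS _ Qy).
have Qx : Q x by move=> C [].
have clQ : closed Q.
  rewrite -[Q]setCK; apply: open_closedC; rewrite setC_bigcap.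
  by apply: bigcup_open => C [[_ ?] _]; exact: closed_openC.
suff cQ : connected Q.
  rewrite -(tdK x I) => z Qz; exists Q => //.
move=> B B0 [C oC BQC] [E cE BQE].
have cB : closed B by rewrite BQE; exact: closedI.
have cB' : closed (Q `&` ~` C) by apply: closedI => //; exact: open_closedC.
have key : forall X1 X2 : set K, closed X1 -> closed X2 -> X1 `&` X2 = set0 ->
    Q = X1 `|` X2 -> X1 x -> X2 = set0.
  move=> X1 X2 c1 c2 d12 QX X1x.
  have [U [V [oU oV X1U X2V UV]]] := (proj1 (@normal_openP R K) (@pseudometric_normal R K)) X1 X2 c1 c2 d12.
  pose F := ~` (U `|` V).
  have cF : compact F.
    apply: (subclosed_compact _ cK) => //.
    by apply: open_closedC; exact: openU.
  have Fcov : F `<=` cover D setC.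
    move=> p Fp; apply: contrapT => np.
    have Qp : Q p.
      move=> G DG; apply: contrapT => nG; apply: np; exists G => //.
    by apply: Fp; rewrite QX in Qp; case: Qp => [/X1U|/X2V]; [left|right].
  rewrite compact_cover in cF.
  have [D' D'D FD'] := cF _ D setC (fun G DC => closed_openC (proj2 (proj1 DC))) Fcov.
  pose C0 := \big[setI/setT]_(G <- finmap.enum_fset D') G.
  have DD' : forall G, G \in D' -> D G by move=> G /D'D /set_mem.
  have clC0 : clopen C0 by apply: bigI_clopen => G /DD' [].
  have C0x : C0 x by apply/bigI_in => G /DD' [].
  have C0UV : C0 `<=` U `|` V.
    move=> p C0p; apply: contrapT => np.
    have [G DC nCp] := FD' _ np.
    by apply: nCp; move/bigI_in : C0p; apply.
  have clC1 : clopen (C0 `&` U).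
    split; first by apply: openI => //; case: clC0.
    have -> : C0 `&` U = C0 `&` ~` V.
      apply/seteqP; split => p [C0p Hp]; split => //.
        by move=> Vp; have : (U `&` V) p by []; rewrite UV.
      by case: (C0UV _ C0p).
    by apply: closedI; [case: clC0|exact: open_closedC].
  have QC1 : Q `<=` C0 `&` U by move=> p Qp; apply: Qp; split => //; split => //; exact: X1U.
  apply/seteqP; split => // p X2p.
  have Qp : Q p by rewrite QX; right.
  have [_ Up] := QC1 _ Qp.
  have Vp := X2V _ X2p.
  by have : (U `&` V) p by []; rewrite UV.
have BQ : B `<=` Q by rewrite BQE => p [].
have [Bx|nBx] := pselect (B x).
  have := key B (Q `&` ~` C) cB cB'.
  have H1 : B `&` (Q `&` ~` C) = set0.
    by apply/seteqP; split => // p [Bp [_ nCp]]; apply: nCp; move: Bp; rewrite BQC => -[].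
  have H2 : Q = B `|` (Q `&` ~` C).
    apply/seteqP; split => [p Qp|p [/BQ//|[]//]].
    have [Cp|nCp] := pselect (C p); [left; rewrite BQC|right]; by split.
  move=> /(_ H1 H2 Bx) H3.
  by rewrite H2 H3 setU0.
have := key (Q `&` ~` C) B cB' cB.
have H1 : (Q `&` ~` C) `&` B = set0.
  by apply/seteqP; split => // p [[_ nCp] Bp]; apply: nCp; move: Bp; rewrite BQC => -[].
have H2 : Q = (Q `&` ~` C) `|` B.
  apply/seteqP; split => [p Qp|p [[]//|/BQ//]].
  have [Cp|nCp] := pselect (C p); [right; rewrite BQC|left]; by split.
have Hx : (Q `&` ~` C) x.
  split => // Cx; apply: nBx; rewrite BQC; split => //.
move=> /(_ H1 H2 Hx) H3.
by case: B0 => p; rewrite H3.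
Qed.

Lemma cyl_filter x : Filter (filter_from [set: nat] (fun n => cyl n x)).
Proof.
apply: filter_from_filter; first by exists 0%N.
move=> i j _ _; exists (maxn i j) => // y /= H; split => k Hk; apply: H.
  by rewrite leq_max Hk.
by rewrite leq_max Hk orbT.
Qed.

Lemma cyl_cvg x : filter_from [set: nat] (fun n => cyl n x) --> x.
Proof.
have := cyl_filter x => FF.
apply/cvg_sup => N U [V] [[W] oW <-] WfN WU.
apply: (filterS WU); exists N.+1 => // y /= H.
by rewrite H.
Qed.

Lemma cyl_of_nbhs x U : nbhs x U -> exists n, cyl n x `<=` U.
Proof. by move=> /cyl_cvg [n _ H]; exists n. Qed.

Lemma cyl_nbhs x n : nbhs x (cyl n x).
Proof.
elim: n => [|n IH].
  have -> : cyl 0 x = setT by apply/seteqP; split=> y // _ k.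
  exact: filterT.
have : nbhs x [set y : cantor_space | y n = x n].
  have H := @proj_continuous nat (fun=> bool) n x.
  have : nbhs (x n) [set x n] by apply/principal_filterP.
  move/H.
  exact.

move=> H; apply: filterS (filterI IH H) => y [H1 H2] k; rewrite ltnS leq_eqVlt.
by case/orP => [/eqP ->|]; [apply H2| apply H1].
Qed.

Lemma cont_C (T : topologicalType) (g : T -> cantor_space) :
  (forall x i, \forall y \near x, g y i = g x i) -> continuous g.
Proof.
move=> H x; apply/cvg_sup => N U [V] [[W] oW <-] WfN WU.
apply: (filterS WU); rewrite nbhs_simpl /=.
apply: filterS (H x N) => y /= ->.
exact: WfN.
Qed.

Definition shiftC (L : nat) (x : cantor_space) : cantor_space := fun k => x (L + k)%N.
Definition catC (L : nat) (z y : cantor_space) : cantor_space :=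
  fun k => if (k < L)%N then z k else y (k - L)%N.

Lemma cyl_mono n m x : (n <= m)%N -> cyl m x `<=` cyl n x.
Proof. by move=> nm y H k kn; apply: H; apply: leq_trans kn nm. Qed.

Lemma cyl_shift L m x y : cyl (L + m) x y -> cyl m (shiftC L x) (shiftC L y).
Proof. by move=> H k km; rewrite /shiftC H // ltn_add2l. Qed.

Lemma cyl_trans n x y u : cyl n x y -> (cyl n x u <-> cyl n y u).
Proof.
move=> H; split => H' k kn; first by rewrite H' // H.
by rewrite H' // H.
Qed.

Section Pigeon.
Lemma pigeon (N : nat) (f : nat -> 'I_N) :
  exists a b, [/\ (a < b)%N, (b <= N)%N & f a = f b].
Proof.
apply: contrapT => H.
pose g (k : 'I_N.+1) := f k.
have ig : injective g.
  move=> k1 k2 E; apply/val_inj; case: (ltngtP k1 k2) => // h; exfalso; apply: H.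
    by exists k1, k2; split => //; rewrite -ltnS.
  by exists k2, k1; split => //; rewrite -ltnS.
by have := @leq_card _ _ g ig; rewrite !card_ord ltnn.
Qed.
End Pigeon.

Lemma iter_fix (T : Type) (f : T -> T) d q u : iter d f u = u -> iter (d * q) f u = u.
Proof.
move=> H; elim: q => [|q IH]; first by rewrite muln0.
by rewrite mulnS iterD IH H.
Qed.

Lemma idx_periodic (N : nat) (p : 'I_N -> 'I_N) (i : nat -> 'I_N) :
  (forall n, p (i n.+1) = i n) -> exists d, (0 < d)%N /\ forall n, i (n + d)%N = i n.
Proof.
move=> Hp.
have back : forall m s, iter m p (i (s + m)%N) = i s.
  elim=> [|m IH] s; first by rewrite addn0.
  by rewrite iterSr addnS Hp IH.
have st1 : forall n, iter N`! p (i n) = i n.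
  move=> n.
  have [a [b [ab bN E]]] := pigeon (fun k => i (n + k)%N).
  set s := (n + a)%N.
  have per : iter (b - a) p (i s) = i s.
    have := back (b - a)%N s; rewrite /s -addnA subnKC ?(ltnW ab) //.
    by rewrite -E.
  have dv : (b - a %| N`!)%N.
    apply: dvdn_fact; rewrite subn_gt0 ab /=.
    by apply: leq_trans (leq_subr _ _) bN.
  have PS : iter N`! p (i s) = i s.
    by case/dvdnP: dv => q ->; rewrite mulnC; apply: iter_fix.
  have := back (s - n)%N n; rewrite subnKC; last by rewrite /s leq_addr.
  move=> <-; rewrite -iterD addnC iterD PS //.
exists N`!; split; first exact: fact_gt0.
by move=> n; rewrite -(st1 (n + N`!)%N) back.
Qed.

Section Construction.
Variable N : nat.
Variables A Kc : 'I_N -> set cantor_space.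
Hypothesis oA : forall i, open (A i).
Hypothesis oK : forall i, open (Kc i).
Hypothesis uA : forall x i j, A i x -> A j x -> i = j.
Hypothesis uK : forall x i j, Kc i x -> Kc j x -> i = j.
Variables rho kap : cantor_space -> 'I_N.
Hypothesis rhoP : forall x, A (rho x) x.
Hypothesis kapP : forall x, Kc (kap x) x.
Variables (z : 'I_N -> cantor_space) (L : 'I_N -> nat).
Hypothesis L_gt0 : forall i, (0 < L i)%N.
Hypothesis zP : forall i, cyl (L i) (z i) `<=` A i `&` Kc (kap (z i)).
Variable e : 'I_N -> cantor_space.
Hypothesis eP : forall i, Kc i (e i).

Definition cond x := cyl (L (rho x)) (z (rho x)) x /\ kap (shiftC (L (rho x)) x) = rho x.
Definition S x := if pselect (cond x) then shiftC (L (rho x)) x else e (rho x).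

Lemma S_itin x : Kc (rho x) (S x).
Proof.
rewrite /S; destruct (pselect (cond x)) as [c|c]; last exact: eP.
by have [_ H] := c; rewrite -[X in Kc X]H; exact: kapP.
Qed.

Lemma S_surj y : exists x, S x = y.
Proof.
pose i := kap y; exists (catC (L i) (z i) y).
have cx : cyl (L i) (z i) (catC (L i) (z i) y) by move=> k kL; rewrite /catC kL.
have ri : rho (catC (L i) (z i) y) = i by apply: uA (rhoP _) (proj1 (zP cx)).
have sh : shiftC (L i) (catC (L i) (z i) y) = y.
  apply: functional_extensionality_dep => k.
  by rewrite /shiftC /catC ltnNge leq_addr /= addKn.
rewrite /S; destruct (pselect (cond _)) as [c|c]; first by rewrite ri sh.
by exfalso; apply: c; rewrite /cond ri sh.
Qed.

Lemma rho_loc x : exists m, forall y, cyl m x y -> rho y = rho x.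
Proof.
have [m Hm] := cyl_of_nbhs (open_nbhs_nbhs (conj (oA (rho x)) (rhoP x))).
by exists m => y /Hm Ay; apply: uA (rhoP y) Ay.
Qed.

Lemma kap_loc x : exists m, forall y, cyl m x y -> kap y = kap x.
Proof.
have [m Hm] := cyl_of_nbhs (open_nbhs_nbhs (conj (oK (kap x)) (kapP x))).
by exists m => y /Hm Ay; apply: uK (kapP y) Ay.
Qed.

Lemma S_cont : continuous S.
Proof.
apply: cont_C => x k.
set i := rho x.
have [m1 H1] := rho_loc x.
have [m2 H2] := kap_loc (shiftC (L i) x).
pose M := maxn m1 (L i + maxn m2 k.+1)%N.
apply: filterS (cyl_nbhs x M) => y yM.
have cyM : forall n, (n <= M)%N -> cyl n x y.
  by move=> n nM; apply: (cyl_mono nM).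
have ry : rho y = i by apply: H1; apply: cyM; rewrite leq_maxl.
have cL : cyl (L i + maxn m2 k.+1) x y by apply: cyM; rewrite leq_maxr.
have cs := cyl_shift cL.
have ky : kap (shiftC (L i) y) = kap (shiftC (L i) x).
  by apply: H2; apply: cyl_mono cs; rewrite leq_maxl.
have cc : cond y <-> cond x.
  rewrite /cond ry -/i ky.
  have cLi : cyl (L i) x y by apply: cyl_mono cL; rewrite leq_addr.
  have E : cyl (L i) (z i) y <-> cyl (L i) (z i) x.
    by split => h kk kk'; rewrite -h // cLi.
  by split => -[h1 h2]; split => //; apply/E.
rewrite /S ry -/i; destruct (pselect (cond y)) as [Hy|Hy]; destruct (pselect (cond x)) as [Hx|Hx].
- by apply: cs; rewrite leq_maxr.
- by exfalso; apply: Hx; apply/cc.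
- by exfalso; apply: Hy; apply/cc.
- by [].
Qed.

Lemma uniq_seq (i : nat -> 'I_N) (y y' : nat -> cantor_space) :
  (forall n, cyl (L (i n)) (z (i n)) (y n)) ->
  (forall n, y n.+1 = shiftC (L (i n)) (y n)) ->
  (forall n, cyl (L (i n)) (z (i n)) (y' n)) ->
  (forall n, y' n.+1 = shiftC (L (i n)) (y' n)) ->
  forall n, y n = y' n.
Proof.
move=> c1 s1 c2 s2.
suff H : forall k n, y n k = y' n k.
  by move=> n; apply: functional_extensionality_dep => k; apply: H.
elim/ltn_ind => k IH n.
case: (ltnP k (L (i n))) => kL; first by rewrite c1 // c2.
have -> : k = (L (i n) + (k - L (i n)))%N by rewrite subnKC.
rewrite -/(shiftC (L (i n)) (y n) (k - L (i n))) -/(shiftC (L (i n)) (y' n) (k - L (i n))).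
rewrite -s1 -s2; apply: IH.
by rewrite ltn_subrL L_gt0 /=; apply: leq_trans (L_gt0 _) kL.
Qed.

Lemma forever x : (forall n, cond (iter n S x)) -> exists M, (0 < M)%N /\ iter M S x = x.
Proof.
move=> H.
pose y n := iter n S x; pose i n := rho (y n).
have yS : forall n, y n.+1 = shiftC (L (i n)) (y n).
  by move=> n; rewrite /y iterS /S; destruct (pselect (cond _)) as [c|c] => //; case: (c (H n)).
have yc : forall n, cyl (L (i n)) (z (i n)) (y n) by move=> n; case: (H n).
have yk : forall n, kap (y n.+1) = i n by move=> n; rewrite yS; case: (H n).
have pi : forall n, kap (z (i n.+1)) = i n.
  move=> n; rewrite -(yk n); have [_ h] := zP (yc n.+1); exact (uK h (kapP _)).
have [d [d0 Hd]] := @idx_periodic N (fun j => kap (z j)) i pi.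
exists d; split => //.
have E : forall n, y n = y (n + d)%N.
  apply: (@uniq_seq i y (fun n => y (n + d)%N) yc yS).
    by move=> n; rewrite -Hd; apply: yc.
  by move=> n; rewrite -Hd addSn; apply: yS.
by have := E 0%N; rewrite add0n /y /= => h; rewrite -h.
Qed.

Lemma S_fp x : finally_periodic S x.
Proof.
have [[t Ht]|nH] := pselect (exists t, forall n, cond (iter n S (iter t S x))).
  have [M [M0 HM]] := forever Ht.
  exists t.+1, M; split => //.
  by rewrite addnS !iterS iterD HM.
have H1 : forall t, exists t', (t < t')%N /\ exists j, iter t' S x = e j.
  move=> t; have /existsNP [n Hn] : ~ forall n, cond (iter n S (iter t S x)).
    by move=> Hf; apply: nH; exists t.
  exists (n + t).+1; split; first by rewrite ltnS leq_addl.
  exists (rho (iter n S (iter t S x))).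
  by rewrite iterS iterD /S; destruct (pselect (cond _)).
have [tt Htt] := choice H1.
pose sg k := iter k tt 0%N.
have sgS : forall k, sg k.+1 = tt (sg k) by move=> k; rewrite /sg iterS.
have sg_lt : forall a b, (a < b)%N -> (sg a < sg b)%N.
  move=> a; elim=> // b IH; rewrite ltnS leq_eqVlt => /orP[/eqP ->|ab].
    by rewrite sgS; case: (Htt (sg b)).
  by apply: ltn_trans (IH ab) _; rewrite sgS; case: (Htt (sg b)).
have ej : forall k, exists j, iter (sg k.+1) S x = e j.
  by move=> k; rewrite sgS; case: (Htt (sg k)).
have [ee Hee] := choice ej.
have [a [b [ab _ E]]] := pigeon ee.
exists (sg a.+1), (sg b.+1 - sg a.+1)%N; split; [|split].
- by have := @sg_lt 0%N a.+1 (ltn0Sn a).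
- by rewrite subn_gt0; exact: (sg_lt a.+1 b.+1 ab).
- by rewrite subnK ?Hee ?E // ltnW // (sg_lt a.+1 b.+1 ab).
Qed.

End Construction.

Lemma main_C (N : nat) (A Kc : 'I_N -> set cantor_space) :
  (forall i, open (A i)) -> (forall i, open (Kc i)) ->
  (forall x i j, A i x -> A j x -> i = j) ->
  (forall x i j, Kc i x -> Kc j x -> i = j) ->
  (forall x, exists i, A i x) -> (forall x, exists i, Kc i x) ->
  (forall i, A i !=set0) -> (forall i, Kc i !=set0) ->
  exists S0 : cantor_space -> cantor_space,
    [/\ continuous S0, (forall y, exists x, S0 x = y),
        (forall x i, A i x -> Kc i (S0 x)) & (forall x, finally_periodic S0 x)].
Proof.
move=> oA oK uA uK cA cK neA neK.
have [rho rhoP] := choice cA.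
have [kap kapP] := choice cK.
have zex : forall i, exists zL : cantor_space * nat,
    (0 < zL.2)%N /\ cyl zL.2 zL.1 `<=` A i `&` Kc (kap zL.1).
  move=> i; have [x Ax] := neA i.
  have op : open (A i `&` Kc (kap x)) by apply: openI.
  have [m Hm] := cyl_of_nbhs (open_nbhs_nbhs (conj op (conj Ax (kapP x)))).
  exists (x, m.+1); split => //=.
  by apply: subset_trans Hm; apply: cyl_mono.
have [zL zLP] := choice zex.
have [e eP] := choice neK.
pose z i := (zL i).1; pose L i := (zL i).2.
have L_gt0 : forall i, (0 < L i)%N by move=> i; case: (zLP i).
have zP : forall i, cyl (L i) (z i) `<=` A i `&` Kc (kap (z i)) by move=> i; case: (zLP i).
exists (S rho kap z L e); split.
- exact: (S_cont oA oK uA uK rhoP kapP).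
- exact: (S_surj uA rhoP zP e).
- move=> x i Ai; have := S_itin rho kapP z L eP x.
  by rewrite (uA _ _ _ (rhoP x) Ai).
- exact: (S_fp uK rho kapP L_gt0 zP e).
Qed.

Definition pK (R : realType) (K : pseudoMetricType R) (k0 : K) : Type := K.
HB.instance Definition _ (R : realType) (K : pseudoMetricType R) (k0 : K) :=
  PseudoMetric.on (pK k0).
HB.instance Definition _ (R : realType) (K : pseudoMetricType R) (k0 : K) :=
  isPointed.Build (pK k0) k0.

Theorem theorem3p1 (R : realType) (K : pseudoMetricType R)
    (hK : hausdorff_space K) (cK : is_cantor_set [set: K])
    (T : K -> K) (hT : endomorphism T)
    (N : nat) (Ks : 'I_N -> set K)
    (cKs : forall i, is_cantor_set (Ks i))
    (disj : forall i j, i <> j -> Ks i `&` Ks j = set0)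
    (cover : \bigcup_(i in [set: 'I_N]) Ks i = [set: K]) :
  exists Tt : K -> K, endomorphism Tt /\
    (forall (x : K) (i : 'I_N), Ks i (Tt x) <-> Ks i (T x)) /\
    (forall x : K, finally_periodic Tt x).
Proof.
case: (cK) => [[k0 _] tdK pfK cpK].
pose KP := pK k0.
have zdK : zero_dimensional KP := @zd_of_td R KP cpK tdK.
have cl : cantor_like KP by split.
have [f [cf clf]] := @homeomorphism_cantor_like R KP cl.
have [g fK gK] := @bijTT _ _ f.
have cg : continuous (g : KP -> cantor_space).
  apply/continuousP => U oU.
  have -> : g @^-1` U = f @` U.
    apply/seteqP; split => [y Uy|y [u Uu <-]]; first by exists (g y) => //; rewrite gK.
    by rewrite /preimage /= fK.
  have -> : f @` U = ~` (f @` ~` U).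
    apply/seteqP; split => [y [u Uu <-] [v nUv E]|y nY].
      by move: (congr1 g E); rewrite !fK => Evu; apply: nUv; rewrite Evu.
    exists (g y); last by rewrite gK.
    by apply: contrapT => nU; apply: nY; exists (g y) => //; rewrite gK.
  by apply: closed_openC; apply: clf; apply: open_closedC.
have uKs : forall y i j, Ks i y -> Ks j y -> i = j.
  move=> y i j Hi Hj; apply: contrapT => ij.
  by have : (Ks i `&` Ks j) y by []; rewrite disj.
have cKs' : forall y, exists i, Ks i y.
  by move=> y; have : [set: K] y by []; rewrite -cover => -[i _ Hi]; exists i.
have oKs : forall i, open (Ks i).
  move=> i.
  have -> : Ks i = ~` (\bigcup_(j in [set j | j != i]) Ks j).
    apply/seteqP; split => [y Hy [j /= ji Hj]|y Hy].
      by move/eqP: ji; apply; apply: uKs Hj Hy.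
    have [j Hj] := cKs' y; have [ji|ji] := eqVneq j i; first by rewrite -ji.
    by exfalso; apply: Hy; exists j.
  apply: closed_openC; apply: closed_bigcup; first exact: finite_finset.
  by move=> j _; apply: compact_closed hK _; case: (cKs j).
have cTf : continuous (T \o (f : cantor_space -> K)).
  by move=> x; apply: continuous_comp; [exact: cf|exact: (proj1 hT)].
pose A i := (T \o (f : cantor_space -> K)) @^-1` Ks i.
pose Kc i := (f : cantor_space -> K) @^-1` Ks i.
have oA : forall i, open (A i) by move=> i; apply: (proj1 (continuousP _)) cTf _ (oKs i).
have oK : forall i, open (Kc i).
  by move=> i; apply: (proj1 (continuousP _)) cf _ (oKs i).
have neA : forall i, A i !=set0.
  move=> i; have [[y Hy] _ _ _] := cKs i; have [x Tx] := proj2 hT y.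
  by exists (g x); rewrite /A /preimage /= gK Tx.
have neK : forall i, Kc i !=set0.
  move=> i; have [[y Hy] _ _ _] := cKs i.
  by exists (g y); rewrite /Kc /preimage /= gK.
have [S0 [cS sS iS pS]] := @main_C N A Kc oA oK
  (fun x => @uKs _) (fun x => @uKs _) (fun x => cKs' _) (fun x => cKs' _) neA neK.
pose Tt (x : K) : K := f (S0 (g x)).
have iterT : forall n x, iter n Tt x = f (iter n S0 (g x)).
  elim=> [|n IH] x /=; first by rewrite gK.
  by rewrite IH /Tt fK.
exists Tt; split; [split|split].
- move=> x; apply: (@continuous_comp KP cantor_space K g (fun u => (f : cantor_space -> K) (S0 u)) x (cg x)).
  apply: (@continuous_comp cantor_space cantor_space K S0 (f : cantor_space -> K) (g x) (cS _)).
  exact: cf.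
- move=> y; have [u Su] := sS (g y); exists (f u).
  by rewrite /Tt fK Su gK.
- move=> x i.
  have [j Aj] := cKs' (T (f (g x))).
  have Kj := iS _ _ Aj.
  rewrite gK in Aj.
  by split => H; [rewrite (uKs _ _ _ H Kj) | rewrite (uKs _ _ _ H Aj)].
- move=> x; have [j [M [j0 [M0 E]]]] := pS (g x).
  by exists j, M; split => //; split => //; rewrite !iterT E.
Qed.
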